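(* Let $A\subset\mathbb{R}^2$ be a set which is not totally disconnected, i.e. $A$ has a connected component which is not a singleton. Then $A+S^1$ has non-empty interior.
   Context: $S^1$ is the Euclidean unit circle in $\mathbb{R}^2$; $X+Y=\{x+y:x\in X,y\in Y\}$. *)

(* Defs.v *)
From HB Require Import structures.
From mathcomp Require Import all_boot all_order all_algebra.
From mathcomp Require Import all_classical all_reals all_analysis.
Set Implicit Arguments. Unset Strict Implicit. Unset Printing Implicit Defensive.
Import Order.TTheory GRing.Theory Num.Theory.
Import numFieldNormedType.Exports.
Local Open Scope classical_set_scope.
Local Open Scope ring_scope.

(* The plane R^2 is modelled as R * R with the product topology
   (= the Euclidean topology). *)

Definition unit_circle (R : realType) : set (R * R) :=
  [set p | p.1 ^+ 2 + p.2 ^+ 2 = 1].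

Definition minkowski_sum (R : realType) (X Y : set (R * R)) : set (R * R) :=
  [set z | exists x y, X x /\ Y y /\ z = (x.1 + y.1, x.2 + y.2)].
Arguments unit_circle R : clear implicits.

(* Main.v *)
Require Import Defs.
From HB Require Import structures.
From mathcomp Require Import all_boot all_order all_algebra.
From mathcomp Require Import all_classical all_reals all_analysis.
From mathcomp Require Import ring lra.
Import Order.TTheory GRing.Theory Num.Theory.
Import numFieldNormedType.Exports.
Local Open Scope classical_set_scope.
Local Open Scope ring_scope.

Definition dd (R : realType) (a b : R * R) : R :=
  (a.1 - b.1) * (a.1 - b.1) + (a.2 - b.2) * (a.2 - b.2).
Arguments dd {R}.

Lemma cont_dd (R : realType) (p : R * R) : continuous (fun z : R * R => dd z p).
Proof.
move=> x.
have h1 : {for x, continuous (fun z : R * R => z.1 - p.1)}.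
  apply: (@continuousB _ _ _ fst (fun=> p.1)); first exact: cvg_fst.
  exact: cst_continuous.
have h2 : {for x, continuous (fun z : R * R => z.2 - p.2)}.
  apply: (@continuousB _ _ _ snd (fun=> p.2)); first exact: cvg_snd.
  exact: cst_continuous.
apply: (@continuousD _ _ _ (fun z : R * R => (z.1 - p.1) * (z.1 - p.1))
   (fun z : R * R => (z.2 - p.2) * (z.2 - p.2))).
  exact: (@continuousM _ _ (fun z : R * R => z.1 - p.1) (fun z : R * R => z.1 - p.1)).
exact: (@continuousM _ _ (fun z : R * R => z.2 - p.2) (fun z : R * R => z.2 - p.2)).
Qed.
Lemma dd_sym (R : realType) (a b : R * R) : dd a b = dd b a.
Proof. rewrite /dd; ring. Qed.

Theorem mainTheorem8 (R : realType) (A : set (R * R)) :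
  ~ totally_disconnected A ->
  (minkowski_sum A (unit_circle R))° !=set0.
Proof.
move=> ntd.
have [p [Ap ncc]] : exists p, A p /\ connected_component A p <> [set p].
  apply: contrapT => H; apply: ntd => p Ap.
  by apply: contrapT => H'; apply: H; exists p.
have [q [Cq qp]] : exists q, connected_component A p q /\ q <> p.
  apply: contrapT => H; apply: ncc; apply/seteqP; split.
    by move=> q Cq; apply: contrapT => qp; apply: H; exists q.
  by move=> _ ->; exact: connected_component_refl.
set C := connected_component A p.
have cC : connected C := @component_connected _ A p.
have CA : C `<=` A := connected_component_sub (A:=A) (x:=p).
have Cp : C p := connected_component_refl Ap.
have key : [set z | dd z p < 1] `&` [set z | 1 < dd z q]
           `<=` minkowski_sum A (unit_circle R).
  move=> z [/= zp zq].
  have ci : connected ((fun c => dd z c) @` C).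
    apply: connected_continuous_connected => //.
    apply: continuous_subspaceT => x.
    have -> : (fun c => dd z c) = (fun c => dd c z).
      by apply: funext => c; rewrite dd_sym.
    exact: cont_dd.
  have /connected_intervalP iC := ci.
  have : ((fun c => dd z c) @` C) 1.
    apply: (iC (dd z p) (dd z q)); [by exists p|by exists q|].
    by rewrite !ltW.
  case=> c Cc hc.
  exists c, (z.1 - c.1, z.2 - c.2); split; first exact: CA.
  split; first by rewrite /unit_circle /= -hc /dd !expr2.
  clear ci iC hc zp zq; case: z => a b /=; congr pair; ring.
have pq : p.1 != q.1 \/ p.2 != q.2.
  apply: contrapT => /not_orP [/negP/negPn/eqP h1 /negP/negPn/eqP h2].
  by apply: qp; move: h1 h2; case: (p) => a b; case: (q) => c d /= -> ->.
set D := dd p q.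
have D0 : 0 < D.
  rewrite /D /dd.
  move: pq.
  case=> [h|h].
  - have : 0 < (p.1 - q.1) * (p.1 - q.1).
      by rewrite -expr2 exprn_even_gt0 //= subr_eq0.
    have : 0 <= (p.2 - q.2) * (p.2 - q.2) by rewrite -expr2 sqr_ge0.
    lra.
  - have : 0 < (p.2 - q.2) * (p.2 - q.2).
      by rewrite -expr2 exprn_even_gt0 //= subr_eq0.
    have : 0 <= (p.1 - q.1) * (p.1 - q.1) by rewrite -expr2 sqr_ge0.
    lra.
have [t [t1 t2]] : exists t : R, t * t * D < 1 /\ 1 < (1 + t) * (1 + t) * D.
  have [D1|D1] := leP D 1; last by exists 0; split; lra.
  set s := Num.sqrt D.
  have s0 : 0 < s by rewrite sqrtr_gt0.
  have ss : s * s = D by rewrite -expr2 sqr_sqrtr // ltW.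
  have s1 : s <= 1 by rewrite -sqrtr1 ler_sqrt.
  exists (s^-1 - 2^-1).
  have e1 : (s^-1 - 2^-1) * s = 1 - s / 2 by field; apply/eqP; lra.
  have e2 : (1 + (s^-1 - 2^-1)) * s = 1 + s / 2 by field; apply/eqP; lra.
  have -> : (s^-1 - 2^-1) * (s^-1 - 2^-1) * D = (1 - s/2) * (1 - s/2).
    by rewrite -ss -e1; ring.
  have -> : (1 + (s^-1 - 2^-1)) * (1 + (s^-1 - 2^-1)) * D = (1 + s/2) * (1 + s/2).
    by rewrite -ss -e2; ring.
  split; nra.
set z0 : R * R := (p.1 + t * (p.1 - q.1), p.2 + t * (p.2 - q.2)).
exists z0; rewrite /interior /=.
apply: (filterS key); apply: open_nbhs_nbhs; split.
  apply: openI.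
    have := @open_comp _ _ (fun z : R * R => dd z p) [set x : R | x < 1]
              (fun x _ => @cont_dd R p x) (@open_lt R 1).
    by [].
  have := @open_comp _ _ (fun z : R * R => dd z q) [set x : R | 1 < x]
              (fun x _ => @cont_dd R q x) (@open_gt R 1).
  by [].
split => /=.
  suff -> : dd z0 p = t * t * D by [].
  by rewrite /z0 /D /dd /=; ring.
suff -> : dd z0 q = (1 + t) * (1 + t) * D by [].
by rewrite /z0 /D /dd /=; ring.
Qed.
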